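(* Let $\kappa\in[1/2,1)$ and let $T$ be a rooted binary tree with $n\ge1$ leaves in which every internal node has exactly two children and, at every internal node, $L\le\kappa N$ and $R\le\kappa N$, where $L$ and $R$ are the numbers of leaves in its left and right subtrees and $N=L+R$. Then the sum, over all leaves of $T$, of their depths is at most $\dfrac{n\log n}{H(\kappa)}$, where $H(\kappa)=-\kappa\log\kappa-(1-\kappa)\log(1-\kappa)$ (with the same logarithm base in numerator and $H$).
   Context: The depth of a leaf is the number of edges on the path from the root to that leaf. *)

(* Defs.v *)
From Stdlib Require Import Reals List.
Import ListNotations.
Open Scope R_scope.

Inductive tree : Type :=
| Leaf : tree
| Node : tree -> tree -> tree.

Fixpoint leaves (t : tree) : nat :=
  match t with
  | Leaf => 1%nat
  | Node l r => (leaves l + leaves r)%nat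
  end.

Fixpoint leaf_depths (t : tree) : list nat :=
  match t with
  | Leaf => [0%nat]
  | Node l r => map S (leaf_depths l ++ leaf_depths r)
  end.

Definition sum_leaf_depths (t : tree) : nat :=
  fold_right Nat.add 0%nat (leaf_depths t).

Fixpoint kappa_balanced (kappa : R) (t : tree) : Prop :=
  match t with
  | Leaf => True
  | Node l r =>
      INR (leaves l) <= kappa * INR (leaves l + leaves r) /\
      INR (leaves r) <= kappa * INR (leaves l + leaves r) /\
      kappa_balanced kappa l /\ kappa_balanced kappa r
  end.

Definition Hent (kappa : R) : R :=
  - kappa * ln kappa - (1 - kappa) * ln (1 - kappa).

(* Main.v *)
Require Import Defs.
From Stdlib Require Import Reals List Lra Lia.
Import ListNotations.
Open Scope R_scope.

Lemma ln_le_pred y : 0 < y -> ln y <= y - 1.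
Proof. intros H. pose proof (exp_ineq1_le (ln y)). rewrite exp_ln in H0; lra. Qed.

Lemma ln_le_mono x y : 0 < x -> x <= y -> ln x <= ln y.
Proof. intros Hx [H|H]. left; apply ln_increasing; lra. subst; lra. Qed.

Lemma tangent x y : 0 < x -> 0 < y -> x * ln x - y * ln y >= (x - y) * (ln y + 1).
Proof.
  intros Hx Hy.
  pose proof (ln_le_pred (y / x)) as H.
  assert (0 < y / x) by (apply Rdiv_lt_0_compat; lra).
  specialize (H H0). unfold Rdiv in H.
  rewrite ln_mult in H by (try apply Rinv_0_lt_compat; lra).
  rewrite ln_Rinv in H by lra.
  assert (x * (ln y - ln x) <= x * (y * / x - 1)) by (apply Rmult_le_compat_l; lra).
  replace (x * (y * / x - 1)) with (y - x) in H1 by (field; lra).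
  nra.
Qed.

Definition h (p : R) := - p * ln p - (1 - p) * ln (1 - p).

Lemma hmono p q : / 2 <= p -> p <= q -> q < 1 -> h q <= h p.
Proof.
  intros. unfold h.
  pose proof (tangent q p ltac:(lra) ltac:(lra)).
  pose proof (tangent (1 - q) (1 - p) ltac:(lra) ltac:(lra)).
  assert (ln (1 - p) <= ln p) by (apply ln_le_mono; lra).
  assert ((q - p) * (ln p - ln (1 - p)) >= 0) by nra.
  nra.
Qed.

Lemma hbound k p : / 2 <= k < 1 -> 1 - k <= p <= k -> h k <= h p.
Proof.
  intros Hk Hp. destruct (Rle_lt_dec (/2) p).
  - apply hmono; lra.
  - replace (h p) with (h (1 - p)) by (unfold h; ring_simplify (1 - (1 - p)); ring).
    apply hmono; lra.
Qed.

Lemma Hpos k : / 2 <= k < 1 -> 0 < Hent k.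
Proof.
  intros Hk. unfold Hent.
  assert (ln k <= 0) by (rewrite <- ln_1; apply ln_le_mono; lra).
  assert (ln (1 - k) < 0) by (rewrite <- ln_1; apply ln_increasing; lra).
  nra.
Qed.

Lemma sum_map_S l : fold_right Nat.add 0%nat (map S l) = (fold_right Nat.add 0%nat l + length l)%nat.
Proof. induction l; simpl; lia. Qed.

Lemma sum_app l1 l2 : fold_right Nat.add 0%nat (l1 ++ l2) = (fold_right Nat.add 0%nat l1 + fold_right Nat.add 0%nat l2)%nat.
Proof. induction l1; simpl; lia. Qed.

Lemma len_depths t : length (leaf_depths t) = leaves t.
Proof. induction t; simpl; auto. rewrite length_map, length_app; lia. Qed.

Lemma leaves_pos t : (1 <= leaves t)%nat.
Proof. induction t; simpl; lia. Qed.

Lemma sum_node l r : sum_leaf_depths (Node l r) =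
  (sum_leaf_depths l + sum_leaf_depths r + leaves (Node l r))%nat.
Proof.
  unfold sum_leaf_depths; simpl. rewrite sum_map_S, sum_app, length_app, !len_depths. lia.
Qed.

Lemma key k (a b : R) : / 2 <= k < 1 -> 1 <= a -> 1 <= b ->
  a <= k * (a + b) -> b <= k * (a + b) ->
  (a + b) * Hent k <= (a + b) * ln (a + b) - a * ln a - b * ln b.
Proof.
  intros Hk Ha Hb H1 H2. set (n := a + b) in *.
  assert (Hn : 0 < n) by (unfold n; lra).
  set (p := a / n).
  assert (Hp : 1 - k <= p <= k).
  { unfold p; split.
    - apply (Rmult_le_reg_r n); [lra|]. unfold Rdiv; rewrite Rmult_assoc, Rinv_l by lra. unfold n in *; nra.
    - apply (Rmult_le_reg_r n); [lra|]. unfold Rdiv; rewrite Rmult_assoc, Rinv_l by lra. lra. }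
  pose proof (hbound k p Hk Hp).
  assert (E1 : ln p = ln a - ln n).
  { unfold p, Rdiv. rewrite ln_mult, ln_Rinv; try apply Rinv_0_lt_compat; lra. }
  assert (E2 : 1 - p = b / n) by (unfold p, n; field; lra).
  assert (E3 : ln (1 - p) = ln b - ln n).
  { rewrite E2. unfold Rdiv. rewrite ln_mult, ln_Rinv; try apply Rinv_0_lt_compat; lra. }
  assert (n * h p = n * ln n - a * ln a - b * ln b).
  { unfold h. rewrite E1, E3, E2. unfold p, n. field. lra. }
  unfold Hent. fold (h k). nra.
Qed.

Lemma main k t : / 2 <= k < 1 -> kappa_balanced k t ->
  INR (sum_leaf_depths t) * Hent k <= INR (leaves t) * ln (INR (leaves t)).
Proof.
  intros Hk. induction t as [|l IHl r IHr]; simpl.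
  - intros _. unfold sum_leaf_depths; simpl. rewrite ln_1. lra.
  - intros [H1 [H2 [Bl Br]]]. rewrite sum_node. simpl leaves.
    specialize (IHl Bl). specialize (IHr Br).
    rewrite !plus_INR in *.
    pose proof (leaves_pos l) as Pl. pose proof (leaves_pos r) as Pr.
    apply le_INR in Pl, Pr. simpl in Pl, Pr.
    pose proof (key k _ _ Hk Pl Pr H1 H2). nra.
Qed.

Theorem theorem4 (kappa : R) (t : tree) (n : nat) :
  / 2 <= kappa < 1 ->
  n = leaves t ->
  (1 <= n)%nat ->
  kappa_balanced kappa t ->
  INR (sum_leaf_depths t) <= INR n * ln (INR n) / Hent kappa.
Proof.
  intros Hk -> _ B. pose proof (Hpos _ Hk). pose proof (main _ _ Hk B).
  apply (Rmult_le_reg_r (Hent kappa)); [lra|].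
  unfold Rdiv; rewrite Rmult_assoc, Rinv_l by lra. lra.
Qed.
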